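(* For every non-negative integer $k$ and every proper $4$-coloring $\varphi$ of $G_k$, we have $\varphi(v_{(k,1)})=\varphi(v_{(0,1)})$ and $\varphi(v_{(k,2)})=\varphi(v_{(0,2)})$.
   Context: The planar graphs $G_k$ are defined inductively. $G_0$ has vertex set $\{v_{(0,1)},v_{(0,2)}\}$ and the single edge $\{v_{(0,1)},v_{(0,2)}\}$. For $i\ge 1$, $G_i$ is obtained from $G_{i-1}$ by adding, for each $j\in\{1,2\}$, four new vertices $a_{(i,j)},b_{(i,j)},c_{(i,j)},v_{(i,j)}$ and the edges $\{a_{(i,j)},b_{(i,j)}\},\{b_{(i,j)},c_{(i,j)}\},\{c_{(i,j)},a_{(i,j)}\}$, $\{a_{(i,j)},v_{(i,j)}\},\{b_{(i,j)},v_{(i,j)}\},\{c_{(i,j)},v_{(i,j)}\}$, $\{a_{(i,j)},v_{(i-1,j)}\},\{b_{(i,j)},v_{(i-1,j)}\},\{c_{(i,j)},v_{(i-1,j)}\}$. A proper $4$-coloring is a map $V(G_k)\to\{1,2,3,4\}$ giving adjacent vertices different colors. *)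

(* Defs.v *)
From mathcomp Require Import all_boot.
Set Implicit Arguments. Unset Strict Implicit. Unset Printing Implicit Defensive.

(* Index j ∈ {1,2} is encoded by 'I_2 (0 ↔ 1, 1 ↔ 2). *)
Inductive vtx : Type :=
  | Vv : nat -> 'I_2 -> vtx
  | Va : nat -> 'I_2 -> vtx
  | Vb : nat -> 'I_2 -> vtx
  | Vc : nat -> 'I_2 -> vtx.

Definition in_G (k : nat) (x : vtx) : Prop :=
  match x with
  | Vv i _ => i <= k
  | Va i _ | Vb i _ | Vc i _ => 1 <= i <= k
  end.

Definition edge_G (k : nat) (x y : vtx) : Prop :=
  (x = Vv 0 ord0 /\ y = Vv 0 (@Ordinal 2 1 isT)) \/
  exists i j, 1 <= i <= k /\
    ((x = Va i j /\ y = Vb i j) \/ (x = Vb i j /\ y = Vc i j) \/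
     (x = Vc i j /\ y = Va i j) \/
     (x = Va i j /\ y = Vv i j) \/ (x = Vb i j /\ y = Vv i j) \/
     (x = Vc i j /\ y = Vv i j) \/
     (x = Va i j /\ y = Vv i.-1 j) \/ (x = Vb i j /\ y = Vv i.-1 j) \/
     (x = Vc i j /\ y = Vv i.-1 j)).

(* a proper 4-colouring of G_k: colours 'I_4 (standing for {1,2,3,4}),
   defined on the vertex set of G_k *)
Definition proper4 (k : nat) (phi : vtx -> 'I_4) : Prop :=
  forall x y, edge_G k x y -> phi x <> phi y.

(* Main.v *)
Require Import Defs.
From mathcomp Require Import all_boot.
From mathcomp Require Import zify.

Lemma pig4 (a b c x y : 'I_4) : a <> b -> b <> c -> c <> a ->
  x <> a -> x <> b -> x <> c -> y <> a -> y <> b -> y <> c -> x = y.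
Proof.
move=> ab bc ca xa xb xc ya yb yc; apply: val_inj.
have := ltn_ord a; have := ltn_ord b; have := ltn_ord c;
have := ltn_ord x; have := ltn_ord y.
have nv : forall u v : 'I_4, u <> v -> val u <> val v by move=> u v H E; apply: H; apply: val_inj.
move: (nv _ _ ab) (nv _ _ bc) (nv _ _ ca) (nv _ _ xa) (nv _ _ xb) (nv _ _ xc)
  (nv _ _ ya) (nv _ _ yb) (nv _ _ yc).
clear nv ab bc ca xa xb xc ya yb yc.
case: a b c x y => [a ?] [b ?] [c ?] [x ?] [y ?] /=.
lia.
Qed.

Lemma step k phi i j : proper4 k phi -> 1 <= i <= k ->
  phi (Vv i j) = phi (Vv i.-1 j).
Proof.
move=> P H.
have E : forall x y, (x = Va i j /\ y = Vb i j) \/ (x = Vb i j /\ y = Vc i j) \/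
     (x = Vc i j /\ y = Va i j) \/
     (x = Va i j /\ y = Vv i j) \/ (x = Vb i j /\ y = Vv i j) \/
     (x = Vc i j /\ y = Vv i j) \/
     (x = Va i j /\ y = Vv i.-1 j) \/ (x = Vb i j /\ y = Vv i.-1 j) \/
     (x = Vc i j /\ y = Vv i.-1 j) -> phi x <> phi y.
  by move=> x y Hxy; apply: P; right; exists i, j; split.
apply: (@pig4 (phi (Va i j)) (phi (Vb i j)) (phi (Vc i j))).
all: try (apply: E; tauto).
all: move=> Q; symmetry in Q; move: Q; apply: E; tauto.
Qed.

Theorem lemma6p1 (k : nat) (phi : vtx -> 'I_4) :
  proper4 k phi ->
  phi (Vv k ord0) = phi (Vv 0 ord0) /\
  phi (Vv k (@Ordinal 2 1 isT)) = phi (Vv 0 (@Ordinal 2 1 isT)).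
Proof.
move=> P.
have G : forall i j, i <= k -> phi (Vv i j) = phi (Vv 0 j).
  move=> i j; elim: i => [//|i IH] Hi.
  rewrite (@step k phi i.+1 j P) /=; last by rewrite Hi.
  by apply: IH; apply: ltnW.
by split; apply: G.
Qed.
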